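(* Let $r,\tilde r:\mathcal S\times\mathcal A\times\mathcal B\to[0,1]$, let $\pi$ be a leader policy with $\pi(\cdot\mid s,b)\in\Delta(\mathcal A)$, and set $r^\pi(s,b)=\sum_a\pi(a\mid s,b)r(s,a,b)$, $\tilde r^\pi(s,b)=\sum_a\pi(a\mid s,b)\tilde r(s,a,b)$, $\nu(b\mid s)\propto\exp(\eta r^\pi(s,b))$ and $\tilde\nu(b\mid s)\propto\exp(\eta\tilde r^\pi(s,b))$. Then for every $s\in\mathcal S$, $$D_{\rm TV}\bigl(\nu(\cdot\mid s),\tilde\nu(\cdot\mid s)\bigr)\le\eta\,\mathbb E_s\Bigl[\bigl|(\tilde r^\pi-r^\pi)(s,b)-\mathbb E_s[(\tilde r^\pi-r^\pi)(s,b)]\bigr|\Bigr]+C^{(3)}\,\mathbb E_s\Bigl[\bigl((\tilde r^\pi-r^\pi)(s,b)-\mathbb E_s[(\tilde r^\pi-r^\pi)(s,b)]\bigr)^2\Bigr],$$ where $\mathbb E_s$ is the expectation over $b\sim\nu(\cdot\mid s)$, $C^{(3)}=\frac{\eta^2e^{2\eta B_A}}{2}\bigl(2+\eta B_Ae^{2\eta B_A}\bigr)$ and $B_A=2+2\eta^{-1}\log|\mathcal B|$.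
   Context: $\mathcal S$ state space, $\mathcal A,\mathcal B$ action sets ($\mathcal B$ finite), $\eta>0$. $D_{\rm TV}(p,q)=\frac12\|p-q\|_1$. *)

(* Defs.v *)
From HB Require Import structures.
From mathcomp Require Import all_boot all_order all_algebra.
From mathcomp Require Import all_classical all_reals all_analysis.
Set Implicit Arguments. Unset Strict Implicit. Unset Printing Implicit Defensive.
Import Order.TTheory GRing.Theory Num.Theory.
Local Open Scope ring_scope.

Section Defs.
Variables (R : realType) (S : Type) (A B : finType).

Definition rpi (pi : S -> B -> A -> R) (r : S -> A -> B -> R) (s : S) (b : B) : R :=
  \sum_(a : A) pi s b a * r s a b.

Definition gibbs (eta : R) (f : B -> R) (b : B) : R :=
  expR (eta * f b) / \sum_(b' : B) expR (eta * f b').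

Definition dTV (p q : B -> R) : R := 2^-1 * \sum_(b : B) `|p b - q b|.

Definition expect (p : B -> R) (g : B -> R) : R := \sum_(b : B) p b * g b.
End Defs.

Definition BA (R : realType) (eta : R) (nB : nat) : R := 2 + 2 * eta^-1 * ln nB%:R.

Definition C3 (R : realType) (eta bA : R) : R :=
  eta ^+ 2 * expR (2 * eta * bA) / 2 * (2 + eta * bA * expR (2 * eta * bA)).

(* Main.v *)
Require Import Defs.
From HB Require Import structures.
From mathcomp Require Import all_boot all_order all_algebra.
From mathcomp Require Import all_classical all_reals all_analysis.
From mathcomp Require Import ring lra.
Import Order.TTheory GRing.Theory Num.Theory.
Set Implicit Arguments. Unset Strict Implicit.
Local Open Scope ring_scope.

Lemma sum_gt0 (R : realType) (B : finType) (F : B -> R) :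
  (0 < #|B|)%N -> (forall b, 0 < F b) -> 0 < \sum_b F b.
Proof.
move=> /card_gt0P [b0 _] hF.
rewrite (bigD1 b0) //=.
have : 0 <= \sum_(i | i != b0) F i by apply: sumr_ge0 => i _; exact: ltW.
have := hF b0; lra.
Qed.

Lemma rpi_bound (R : realType) (S : Type) (A B : finType)
  (r : S -> A -> B -> R) (pi : S -> B -> A -> R)
  (hr : forall s a b, 0 <= r s a b <= 1)
  (hpi0 : forall s b a, 0 <= pi s b a)
  (hpi1 : forall s b, \sum_(a : A) pi s b a = 1) s b :
  0 <= rpi pi r s b <= 1.
Proof.
rewrite /rpi; apply/andP; split.
  by apply: sumr_ge0 => a _; apply: mulr_ge0 => //; case/andP: (hr s a b).
rewrite -(hpi1 s b); apply: ler_sum => a _.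
by rewrite ler_piMr //; case/andP: (hr s a b).
Qed.

Lemma gibbs_ge0 (R : realType) (B : finType) eta (f : B -> R) b :
  0 <= gibbs eta f b.
Proof.
rewrite /gibbs divr_ge0 ?expR_ge0 //.
by apply: sumr_ge0 => i _; exact: expR_ge0.
Qed.

Lemma gibbs_sum1 (R : realType) (B : finType) eta (f : B -> R) :
  (0 < #|B|)%N -> \sum_b gibbs eta f b = 1.
Proof.
move=> hB; rewrite /gibbs -big_distrl /= divff // gt_eqF //.
by apply: sum_gt0 => // b; exact: expR_gt0.
Qed.
Lemma exp_aux (R : realType) (x : R) : expR x <= 1 + x * expR x.
Proof.
have h := @expR_ge1Dx R (- x); rewrite expRN in h.
have hp := expR_gt0 x.
have : (1 - x) * expR x <= (expR x)^-1 * expR x by rewrite ler_pM2r.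
rewrite mulVf ?gt_eqF //. nra.
Qed.

Lemma h_bound (R : realType) (x : R) : expR x - 1 - x <= x ^+ 2 * expR `|x|.
Proof.
have e1 := exp_aux x. have e2 := @expR_ge1Dx R x. have hp := expR_gt0 x.
have hF : 1 <= expR `|x| by rewrite -expR0 ler_expR.
case: (lerP 0 x) => hx.
  rewrite ger0_norm //.
  have : x * (expR x - 1) <= x * (x * expR x) by rewrite ler_wpM2l //; lra.
  nra.
rewrite ltr0_norm //.
have : (- x) * (1 - expR x) <= (- x) * (- x) by rewrite ler_wpM2l //; lra.
have : x ^+ 2 * 1 <= x ^+ 2 * expR (- x) by rewrite ler_wpM2l //; [exact: sqr_ge0 | rewrite -ltr0_norm].
rewrite expr2 mulr1.
nra.
Qed.

Lemma tv_core (R : realType) (B : finType) (p x : B -> R) :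
  (forall b, 0 <= p b) -> \sum_b p b = 1 -> \sum_b p b * x b = 0 ->
  \sum_b `|p b - p b * expR (x b) / (\sum_b' p b' * expR (x b'))|
   <= \sum_b p b * `|x b| + 2 * \sum_b p b * (expR (x b) - 1 - x b).
Proof.
move=> hp0 hp1 hx0.
set Z := \sum_b' p b' * expR (x b').
have hh : forall b, 0 <= expR (x b) - 1 - x b.
  by move=> b; have := @expR_ge1Dx R (x b); lra.
have hZ : \sum_b p b * (expR (x b) - 1 - x b) = Z - 1.
  under eq_bigr do rewrite !mulrBr mulr1.
  by rewrite !sumrB hp1 hx0 subr0.
have Z1 : 1 <= Z.
  have : 0 <= \sum_b p b * (expR (x b) - 1 - x b).
    by apply: sumr_ge0 => b _; apply: mulr_ge0.
  rewrite hZ; lra.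
have Zp : 0 < Z by lra.
have term : forall b, `|p b - p b * expR (x b) / Z| <=
   p b * `|x b| + p b * (expR (x b) - 1 - x b) + p b * (Z - 1).
  move=> b.
  have -> : p b - p b * expR (x b) / Z = p b * (Z - expR (x b)) / Z.
    by field; rewrite gt_eqF.
  rewrite normrM normrM normfV (ger0_norm (hp0 b)) (gtr0_norm Zp).
  apply: (@le_trans _ _ (p b * `|Z - expR (x b)|)).
    rewrite -mulrA ler_wpM2l //.
    by apply: ler_piMr => //; rewrite invr_le1 // unitfE gt_eqF.
  rewrite -!mulrDr ler_wpM2l // ler_norml.
  have := hh b; have := ler_norm (x b); have := ler_norm (- x b); rewrite normrN.
  lra.
apply: le_trans; first by apply: ler_sum => b _; exact: term.
rewrite !big_split /= -big_distrl /= hp1 mul1r hZ; lra.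
Qed.

Lemma gibbs_shift (R : realType) (B : finType) eta (f g : B -> R) c b :
  (0 < #|B|)%N ->
  gibbs eta g b = gibbs eta f b * expR (eta * (g b - f b - c)) /
     \sum_b' gibbs eta f b' * expR (eta * (g b' - f b' - c)).
Proof.
move=> hB.
have hW : 0 < \sum_b' expR (eta * f b') by apply: sum_gt0 => // i; exact: expR_gt0.
have eg : forall i, expR (eta * g i) = expR (eta * c) * (expR (eta * f i) * expR (eta * (g i - f i - c))).
  move=> i; rewrite -!expRD; congr expR; ring.
have hK : 0 < \sum_b' expR (eta * f b') * expR (eta * (g b' - f b' - c)).
  by apply: sum_gt0 => // i; apply: mulr_gt0; exact: expR_gt0.
rewrite /gibbs eg.
under [X in _ = _ / X]eq_bigr do rewrite mulrAC.
under [X in _ / X = _]eq_bigr do rewrite eg.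
rewrite -big_distrr -big_distrl /=.
field.
by rewrite !gt_eqF ?expR_gt0.
Qed.

Lemma C3_ge (R : realType) (eta : R) (nB : nat) : 0 < eta -> (0 < nB)%N ->
  eta ^+ 2 * expR (2 * eta) <= C3 eta (BA eta nB).
Proof.
move=> he hn.
have hl : 0 <= ln (nB%:R : R) by apply: ln_ge0; rewrite ler1n.
have hbA : 2 <= BA eta nB.
  rewrite /BA; have : 0 <= 2 * eta^-1 * ln (nB%:R : R).
    by rewrite !mulr_ge0 // invr_ge0 ltW.
  lra.
set bA := BA eta nB.
have {}hbA : 2 <= bA by [].
have hE : expR (2 * eta) <= expR (2 * eta * bA).
  by rewrite ler_expR -{1}(mulr1 (2 * eta)) ler_wpM2l //; lra.
set E := expR (2 * eta * bA).
have E0 : 0 < E := expR_gt0 _.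
have -> : C3 eta bA = eta ^+ 2 * E + eta ^+ 2 * E / 2 * (eta * bA * E).
  by rewrite /C3 -/E; field.
have a0 : 0 <= eta ^+ 2 * E / 2.
  by rewrite divr_ge0 // mulr_ge0 // ?sqr_ge0 // ltW.
have a1 : 0 <= eta * bA * E.
  by rewrite !mulr_ge0 // ltW //; apply: lt_le_trans hbA.
have H1 := mulr_ge0 a0 a1.
have H2 : eta ^+ 2 * expR (2 * eta) <= eta ^+ 2 * E by rewrite ler_wpM2l // sqr_ge0.
lra.
Qed.

Unset Implicit Arguments. Set Strict Implicit.
Theorem mainTheorem5 (R : realType) (S : Type) (A B : finType) (eta : R)
  (r rt : S -> A -> B -> R) (pi : S -> B -> A -> R)
  (heta : 0 < eta) (hB : (0 < #|B|)%N)
  (hr : forall s a b, 0 <= r s a b <= 1)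
  (hrt : forall s a b, 0 <= rt s a b <= 1)
  (hpi0 : forall s b a, 0 <= pi s b a)
  (hpi1 : forall s b, \sum_(a : A) pi s b a = 1)
  (s : S) :
  let nu := gibbs eta (rpi pi r s) in
  let nut := gibbs eta (rpi pi rt s) in
  let d := fun b : B => rpi pi rt s b - rpi pi r s b in
  dTV nu nut <=
    eta * expect nu (fun b => `|d b - expect nu d|)
    + C3 eta (BA eta #|B|) * expect nu (fun b => (d b - expect nu d) ^+ 2).
Proof.
cbv zeta.
set nu := gibbs eta (rpi pi r s).
set nut := gibbs eta (rpi pi rt s).
set d := fun b : B => rpi pi rt s b - rpi pi r s b.
set c := expect nu d.
set x := fun b => eta * (d b - c).
have hnu0 : forall b, 0 <= nu b by move=> b; exact: gibbs_ge0.
have hnu1 : \sum_b nu b = 1 by exact: gibbs_sum1.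
have hd : forall b, -1 <= d b <= 1.
  move=> b; rewrite /d.
  have := rpi_bound hr hpi0 hpi1 s b; have := rpi_bound hrt hpi0 hpi1 s b.
  move=> /andP[? ?] /andP[? ?]; apply/andP; split; lra.
have hc : -1 <= c <= 1.
  apply/andP; split.
    rewrite -hnu1 -sumrN /c /expect; apply: ler_sum => b _.
    have := hd b; have := hnu0 b; move=> ? /andP[? ?].
    rewrite -mulrN1; apply: ler_wpM2l => //.
  rewrite -hnu1 /c /expect; apply: ler_sum => b _.
  have := hd b; have := hnu0 b; move=> ? /andP[? ?].
  by rewrite -[leRHS]mulr1; apply: ler_wpM2l.
have hdel : forall b, `|d b - c| <= 2.
  move=> b; have := hd b; case/andP: hc => ? ? /andP[? ?].
  rewrite ler_norml; apply/andP; split; lra.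
have hnut : forall b, nut b = nu b * expR (x b) / \sum_b' nu b' * expR (x b').
  by move=> b; rewrite /nut /nu /x (gibbs_shift eta (rpi pi r s) _ c b hB).
have hx0 : \sum_b nu b * x b = 0.
  rewrite /x.
  under eq_bigr do rewrite mulrCA mulrBr.
  by rewrite -big_distrr /= sumrB -big_distrl /= hnu1 mul1r /c /expect subrr mulr0.
have core := tv_core hnu0 hnu1 hx0.
rewrite /dTV.
under eq_bigr do rewrite hnut.
set E1 := expect nu (fun b => `|d b - c|).
set E2 := expect nu (fun b => (d b - c) ^+ 2).
have e1 : \sum_b nu b * `|x b| = eta * E1.
  rewrite /E1 /expect big_distrr /=; apply: eq_bigr => b _.
  by rewrite /x normrM (gtr0_norm heta) mulrCA.
have e2 : \sum_b nu b * (expR (x b) - 1 - x b) <= eta ^+ 2 * expR (2 * eta) * E2.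
  rewrite /E2 /expect big_distrr /=; apply: ler_sum => b _.
  rewrite mulrCA; apply: ler_wpM2l => //.
  apply: (le_trans (h_bound (x b))).
  have hx2 : x b ^+ 2 = eta ^+ 2 * (d b - c) ^+ 2 by rewrite /x exprMn.
  have he : expR `|x b| <= expR (2 * eta).
    rewrite ler_expR /x normrM (gtr0_norm heta) mulrC ler_wpM2r //; exact: ltW.
  rewrite hx2 mulrAC; apply: ler_wpM2r; first exact: sqr_ge0.
  by apply: ler_wpM2l => //; exact: sqr_ge0.
have E10 : 0 <= E1 by apply: sumr_ge0 => b _; rewrite mulr_ge0.
have E20 : 0 <= E2 by apply: sumr_ge0 => b _; rewrite mulr_ge0 // sqr_ge0.
have hC := C3_ge heta hB.
have hC2 := ler_wpM2r E20 hC.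
have hh : 0 <= eta * E1 by rewrite mulr_ge0 // ltW.
rewrite e1 in core.
lra.
Qed.
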